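(* In the DID setting of the context with $N_1=1$ (single treated unit, indexed $1$), suppose Assumption 1 holds. Consider testing $H_0:\alpha=\alpha_0$ at level $\tau\in(0,1)$ by rejecting when $\widehat\alpha-\alpha_0$ is below the $\tau/2$-quantile or above the $1-\tau/2$-quantile of the empirical distribution $\widehat F$ of the control residuals $\{\widehat W_i\}_{i\in\mathcal I_0}$. Then, under $H_0$, the rejection probability converges to $\tau$ as $N_0\to\infty$ (the test is asymptotically valid), even though the errors may be spatially correlated.
   Context: Units $i\in\mathcal I_1$ (treated, $|\mathcal I_1|=N_1$) and $i\in\mathcal I_0$ (control, $|\mathcal I_0|=N_0$), periods $t=1,\dots,T$; $\mathcal T_0=\{1,\dots,t^\ast\}$, $\mathcal T_1=\{t^\ast+1,\dots,T\}$, $T$ fixed. Potential outcomes: $Y_{it}(0)=\theta_i+\gamma_t+\eta_{it}$, $Y_{it}(1)=\alpha_{it}+Y_{it}(0)$; observed $Y_{it}=Y_{it}(1)$ if $i\in\mathcal I_1,t\in\mathcal T_1$, else $Y_{it}(0)$. The $\alpha_{it}$ are fixed and $\alpha=\frac{1}{N_1}\frac{1}{T-t^\ast}\sum_{i\in\mathcal I_1}\sum_{t\in\mathcal T_1}\alpha_{it}$. For a sequence $A_t$, $\nabla A=\frac{1}{T-t^\ast}\sum_{t\in\mathcal T_1}A_t-\frac{1}{t^\ast}\sum_{t\in\mathcal T_0}A_t$; $W_i=\nabla\eta_{i\cdot}$. $\widehat\alpha=\frac{1}{N_1}\sum_{i\in\mathcal I_1}\nabla Y_i-\frac{1}{N_0}\sum_{i\in\mathcal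 I_0}\nabla Y_i$; control residuals $\widehat W_i=\nabla Y_i-\frac1{N_0}\sum_{j\in\mathcal I_0}\nabla Y_j$; $\widehat F(c)=N_0^{-1}\sum_{i\in\mathcal I_0}\mathbbm 1\{\widehat W_i\le c\}$. Treatment assignment is fixed. Assumption 1: (i) $\mathbb E[W_i]=0$ for all $i$; (ii) all $W_i$ have the same marginal distribution, with continuous cdf $F$ and finite second moment; (iii) as $N_0\to\infty$, $\frac1{N_0}\sum_{i\in\mathcal I_0}W_i\xrightarrow{p}0$ and $\frac1{N_0}\sum_{i\in\mathcal I_0}\mathbbm 1\{W_i\le c\}\xrightarrow{p}F(c)$ for each $c$. *)

(* Defs.v *)
From HB Require Import structures.
From mathcomp Require Import all_boot all_order all_algebra.
From mathcomp Require Import all_classical all_reals all_analysis.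
Set Implicit Arguments. Unset Strict Implicit. Unset Printing Implicit Defensive.
Import Order.TTheory GRing.Theory Num.Theory numFieldNormedType.Exports.
Local Open Scope ring_scope.
Local Open Scope classical_set_scope.

Section DID.
Variable R : realType.

(* Periods t = 1..T are represented by t : 'I_T (0-based);
   pre-treatment periods T_0 = {1,...,t*} are the t with t < tstar,
   post-treatment periods T_1 = {t*+1,...,T} are the t with tstar <= t. *)

Definition nabla (T tstar : nat) (A : 'I_T -> R) : R :=
  (T - tstar)%:R^-1 * (\sum_(t < T | (tstar <= t)%N) A t)
  - tstar%:R^-1 * (\sum_(t < T | (t < tstar)%N) A t).

Definition avg (n : nat) (f : 'I_n -> R) : R := n%:R^-1 * \sum_(i < n) f i.

Definition ecdf (n : nat) (f : 'I_n -> R) (c : R) : R :=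
  n%:R^-1 * \sum_(i < n) (((f i <= c)%R : bool) : nat)%:R.

Definition quantile (G : R -> R) (p : R) : R := inf [set c | p <= G c].

(* DID estimator with one treated unit: Y1 t = outcomes of the treated unit,
   Y0 i t = outcomes of control unit i *)
Definition alpha_hat (T tstar n : nat) (Y1 : 'I_T -> R) (Y0 : 'I_n -> 'I_T -> R)
  : R := nabla tstar Y1 - avg (fun i => nabla tstar (Y0 i)).

Definition W_hat (T tstar n : nat) (Y0 : 'I_n -> 'I_T -> R) (i : 'I_n) : R :=
  nabla tstar (Y0 i) - avg (fun j => nabla tstar (Y0 j)).

Definition reject (T tstar n : nat) (Y1 : 'I_T -> R) (Y0 : 'I_n -> 'I_T -> R)
  (alpha0 tau : R) : bool :=
  let Fh := ecdf (W_hat tstar Y0) in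
  (alpha_hat tstar Y1 Y0 - alpha0 < quantile Fh (tau / 2))
  || (quantile Fh (1 - tau / 2) < alpha_hat tstar Y1 Y0 - alpha0).

End DID.

(* Main.v *)
Require Import Defs.
From HB Require Import structures.
From mathcomp Require Import all_boot all_order all_algebra.
From mathcomp Require Import all_classical all_reals all_analysis.
From mathcomp Require Import lra zify.
Import Order.TTheory GRing.Theory Num.Theory numFieldNormedType.Exports.
Local Open Scope ring_scope.
Local Open Scope classical_set_scope.

Section Q.
Variable R : realType.
Variable n : nat.
Hypothesis n0 : (0 < n)%N.
Implicit Types f : 'I_n -> R.

Definition ecdfs f (c : R) : R :=
  n%:R^-1 * \sum_(i < n) (((f i < c)%R : bool) : nat)%:R.

Lemma ninv_gt0 : 0 < n%:R^-1 :> R.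
Proof. by rewrite invr_gt0 ltr0n. Qed.

Lemma sum_ind_le (b1 b2 : 'I_n -> bool) :
  (forall i, b1 i -> b2 i) ->
  \sum_(i < n) ((b1 i : nat)%:R : R) <= \sum_(i < n) ((b2 i : nat)%:R).
Proof.
move=> h; apply: ler_sum => i _; case: (b1 i) (h i) => [->//|_].
by rewrite ler0n.
Qed.

Lemma cnt_imp (b1 b2 : 'I_n -> bool) :
  (forall i, b1 i -> b2 i) ->
  n%:R^-1 * \sum_(i < n) ((b1 i : nat)%:R : R) <= n%:R^-1 * \sum_(i < n) ((b2 i : nat)%:R).
Proof. move=> h; rewrite ler_wpM2l ?invr_ge0 ?ler0n //; exact: sum_ind_le. Qed.

Lemma ecdf_imp f g x y : (forall i, f i <= x -> g i <= y) -> ecdf f x <= ecdf g y.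
Proof.
move=> h; rewrite /ecdf ler_wpM2l ?invr_ge0 ?ler0n //; exact: sum_ind_le.
Qed.

Lemma ecdf_le f x y : x <= y -> ecdf f x <= ecdf f y.
Proof. move=> xy; apply: ecdf_imp => i fx; exact: le_trans xy. Qed.

Lemma sum_ind_all (b : 'I_n -> bool) : (forall i, b i) ->
  n%:R^-1 * \sum_(i < n) ((b i : nat)%:R : R) = 1.
Proof.
move=> h; under eq_bigr => i _ do rewrite h.
by rewrite sumr_const card_ord -[_ *+ n]mulr_natr mul1r mulVf // pnatr_eq0 -lt0n.
Qed.

Lemma sum_ind_none (b : 'I_n -> bool) : (forall i, ~~ b i) ->
  n%:R^-1 * \sum_(i < n) ((b i : nat)%:R : R) = 0.
Proof.
move=> h; under eq_bigr => i _ do rewrite (negbTE (h i)).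
by rewrite big1 ?mulr0.
Qed.

Definition Sset f p := [set c : R | p <= ecdf f c].

Lemma Sset_lb f p : 0 < p -> lbound (Sset f p) (- \sum_(i < n) `|f i|).
Proof.
move=> p0 c; rewrite /Sset /= => pc.
have [i fic] : exists i, f i <= c.
  apply/not_existsP => h.
  move: pc; rewrite /ecdf sum_ind_none ?leNgt ?p0 // => i.
  by apply/negP => fi; apply: (h i).
apply: le_trans fic; rewrite lerNl.
apply: le_trans (ler_norm _) _; rewrite normrN.
by rewrite (bigD1 i) //= lerDl sumr_ge0.
Qed.

Lemma Sset_ne f p : p <= 1 -> Sset f p !=set0.
Proof.
move=> p1; exists (\sum_(i < n) `|f i|); rewrite /Sset /= /ecdf sum_ind_all // => i.
apply: le_trans (ler_norm _) _.
by rewrite (bigD1 i) //= lerDl sumr_ge0.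
Qed.

Lemma q_gt f p x : 0 < p -> p <= 1 ->
  (x < quantile (ecdf f) p) = (ecdf f x < p).
Proof.
move=> p0 p1; apply/idP/idP.
- move=> xq; rewrite ltNge; apply/negP => px.
  have : quantile (ecdf f) p <= x.
    by apply: ge_inf => //; exists (- \sum_(i < n) `|f i|); exact: Sset_lb.
  by rewrite leNgt xq.
- move=> fx.
  pose m := \big[Order.min/1]_(i < n | x < f i) (f i - x).
  have m0 : 0 < m.
    rewrite /m; elim/big_ind: _ => //.
    + by move=> a b a0 b0; rewrite lt_min a0 b0.
    + by move=> i xi; rewrite subr_gt0.
  have mle i : x < f i -> m <= f i - x.
    by move=> xi; rewrite /m (bigD1 i) //= ge_min lexx.
  apply: (@lt_le_trans _ _ (x + m)); first by rewrite ltrDl.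
  apply: lb_le_inf; first exact: Sset_ne.
  move=> c; rewrite /Sset /= => pc; rewrite leNgt; apply/negP => cxm.
  have : ecdf f c <= ecdf f x.
    apply: ecdf_imp => i fic; rewrite leNgt; apply/negP => xfi.
    by have := mle i xfi; lra.
  lra.
Qed.

Lemma q_lt f p x : 0 < p -> p <= 1 ->
  (quantile (ecdf f) p < x) = (p <= ecdfs f x).
Proof.
move=> p0 p1; apply/idP/idP.
- move=> /(inf_lt (Sset_ne f p p1)) [c pc cx].
  apply: (le_trans pc); rewrite /ecdf /ecdfs ler_pM2l ?ninv_gt0 //.
  apply: sum_ind_le => i fic; exact: le_lt_trans cx.
- move=> px.
  pose m := \big[Order.min/1]_(i < n | f i < x) (x - f i).
  have m0 : 0 < m.
    rewrite /m; elim/big_ind: _ => //.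
    + by move=> a b a0 b0; rewrite lt_min a0 b0.
    + by move=> i xi; rewrite subr_gt0.
  have mle i : f i < x -> m <= x - f i.
    by move=> xi; rewrite /m (bigD1 i) //= ge_min lexx.
  apply: (@le_lt_trans _ _ (x - m)); last by rewrite ltrBlDr ltrDl.
  apply: ge_inf; first by exists (- \sum_(i < n) `|f i|); exact: Sset_lb.
  rewrite /Sset /=; apply: (le_trans px).
  rewrite /ecdf /ecdfs ler_pM2l ?ninv_gt0 //.
  apply: sum_ind_le => i fx; have := mle i fx; lra.
Qed.

End Q.
Arguments ecdfs {R n} f c.
Section N.
Variable R : realType.
Variables T tstar : nat.
Hypothesis hts : (0 < tstar < T)%N.

Lemma cnt_post : \sum_(t < T | (tstar <= t)%N) (1:R) = (T - tstar)%:R.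
Proof.
case/andP: hts => h1 h2.
have -> : \sum_(t < T | (tstar <= t)%N) (1:R) = \sum_(0 <= t < T | (tstar <= t)%N) 1 by rewrite big_mkord.
rewrite (@big_cat_nat _ _ _ tstar); [|by []|exact: ltnW].
rewrite big_nat_cond big_pred0; last first.
  by move=> i; apply/negP => /andP[/andP[_ a] b]; lia.
rewrite /= add0r big_nat_cond (eq_bigl (fun i => (tstar <= i < T)%N && true)); last first.
  by move=> i /=; case: (tstar <= i)%N.
by rewrite -big_nat_cond sumr_const_nat.
Qed.

Lemma cnt_pre : \sum_(t < T | (t < tstar)%N) (1:R) = tstar%:R.
Proof.
case/andP: hts => h1 h2.
have -> : \sum_(t < T | (t < tstar)%N) (1:R) = \sum_(0 <= t < T | (t < tstar)%N) 1 by rewrite big_mkord.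
rewrite (@big_cat_nat _ _ _ tstar); [|by []|exact: ltnW].
rewrite /= [X in _ + X]big_nat_cond [X in _ + X]big_pred0; last first.
  by move=> i; apply/negP => /andP[/andP[a _] b]; lia.
rewrite /= addr0 big_nat_cond (eq_bigl (fun i => (0 <= i < tstar)%N && true)); last first.
  by move=> i /=; case: (i < tstar)%N; rewrite ?andbT ?andbF.
by rewrite -big_nat_cond sumr_const_nat subn0.
Qed.

Lemma nabla_cst (c : R) : nabla tstar (fun _ : 'I_T => c) = 0.
Proof.
case/andP: hts => h1 h2.
rewrite /nabla -[c]mulr1 -!mulr_sumr cnt_post cnt_pre.
rewrite !mulrA [_^-1 * c]mulrC [tstar%:R^-1 * c]mulrC -!mulrA !mulVf ?subrr //.
  by rewrite pnatr_eq0 -lt0n.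
by rewrite pnatr_eq0 subn_eq0 -ltnNge.
Qed.

Lemma nablaD (A B : 'I_T -> R) : nabla tstar (fun t => A t + B t) = nabla tstar A + nabla tstar B.
Proof. rewrite /nabla !big_split /=; lra. Qed.

Lemma nabla_if (al : 'I_T -> R) :
  nabla tstar (fun t => if (tstar <= t)%N then al t else 0) =
  (T - tstar)%:R^-1 * \sum_(t < T | (tstar <= t)%N) al t.
Proof.
rewrite /nabla (eq_bigr al); last by move=> i ->.
rewrite [X in _ - _ * X]big1 ?mulr0 ?subr0 // => i; case: leqP => //; lia.
Qed.

End N.

Section Rej.
Variable R : realType.
Variables T tstar : nat.
Hypothesis hts : (0 < tstar < T)%N.

Lemma avg_shift n (n0 : (0 < n)%N) (c : R) (h : 'I_n -> R) :
  avg (fun i => c + h i) = c + avg h.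
Proof.
rewrite /avg big_split /= sumr_const card_ord mulrDr -[c *+ n]mulr_natr.
by rewrite mulrC -mulrA mulfV ?mulr1 // pnatr_eq0 -lt0n.
Qed.

Lemma ecdf_shift n (f : 'I_n -> R) (x s : R) : ecdf (fun i => f i - s) (x - s) = ecdf f x.
Proof. by rewrite /ecdf; under eq_bigr => i _ do rewrite lerD2r. Qed.

Lemma ecdfs_shift n (f : 'I_n -> R) (x s : R) : ecdfs (fun i => f i - s) (x - s) = ecdfs f x.
Proof. by rewrite /ecdfs; under eq_bigr => i _ do rewrite ltrD2r. Qed.

Lemma reject_eq n (n0 : (0 < n)%N) (al : 'I_T -> R) (th1 : R) (g e1 : 'I_T -> R)
  (th0 : 'I_n -> R) (e0 : 'I_n -> 'I_T -> R) (alpha0 tau : R) :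
  (T - tstar)%:R^-1 * (\sum_(t < T | (tstar <= t)%N) al t) = alpha0 ->
  0 < tau < 1 ->
  reject tstar (fun t => (if (tstar <= t)%N then al t else 0) + th1 + g t + e1 t)
    (fun i t => th0 i + g t + e0 i t) alpha0 tau =
  (ecdf (fun i => nabla tstar (e0 i)) (nabla tstar e1) < tau / 2)
  || (1 - tau / 2 <= ecdfs (fun i => nabla tstar (e0 i)) (nabla tstar e1)).
Proof.
move=> hal /andP[t0 t1].
rewrite /reject /alpha_hat /W_hat.
rewrite !nablaD // nabla_if // nabla_cst // hal.
under eq_fun => i do rewrite !nablaD // nabla_cst // add0r.
rewrite avg_shift //.
set A := avg _.
have -> : alpha0 + 0 + nabla tstar g + nabla tstar e1 - (nabla tstar g + A) - alpha0
   = nabla tstar e1 - A by lra.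
have -> : (fun i => nabla tstar (fun t : 'I_T => th0 i + g t + e0 i t) - (nabla tstar g + A))
   = (fun i => nabla tstar (e0 i) - A).
  by apply: funext => i; rewrite !nablaD nabla_cst //; lra.
rewrite q_gt // ?q_lt //; try lra.
by rewrite ecdf_shift ecdfs_shift.
Qed.

End Rej.

Set Implicit Arguments. Unset Strict Implicit.
Section Pr.
Variables (R : realType) (d : measure_display) (Omega : measurableType d).
Variable P : probability Omega R.

Definition pr (A : set Omega) : R := fine (P A).

Lemma Pfin A : measurable A -> P A \is a fin_num.
Proof.
move=> mA; rewrite ge0_fin_numE ?measure_ge0 //.
by apply: (le_lt_trans (probability_le1 P mA)); rewrite ltry.
Qed.

Lemma PE A : measurable A -> P A = (pr A)%:E.
Proof. by move=> mA; rewrite /pr fineK // Pfin. Qed.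

Lemma pr_ge0 A : 0 <= pr A.
Proof. by rewrite /pr fine_ge0 ?measure_ge0. Qed.

Lemma pr_le A B : measurable A -> measurable B -> A `<=` B -> pr A <= pr B.
Proof.
move=> mA mB AB; have := @le_measure _ _ _ P A B (mem_set mA) (mem_set mB) AB.
by apply: fine_le; apply: Pfin.
Qed.

Lemma pr_U A B : measurable A -> measurable B -> pr (A `|` B) <= pr A + pr B.
Proof.
move=> mA mB; have := measureU2 P mA mB.
move=> h; rewrite -lee_fin EFinD -!PE //; exact: measurableU.
Qed.

Lemma pr_disj A B : measurable A -> measurable B -> A `&` B = set0 ->
  pr (A `|` B) = pr A + pr B.
Proof.
move=> mA mB AB; have h := measureU P mA mB AB.
apply: EFin_inj; rewrite EFinD -!PE //.
all: first [exact h | by apply: measurableU].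
Qed.

Lemma pr_C A : measurable A -> pr (~` A) = 1 - pr A.
Proof.
move=> mA; have h := probability_setC P mA.
apply: EFin_inj; rewrite EFinB -!PE //.
all: first [exact h | by apply: measurableC].
Qed.

Lemma mset (b : Omega -> bool) : measurable_fun setT b -> measurable [set w | b w].
Proof.
move=> mb; have := mb measurableT [set true] I.
by rewrite setTI.
Qed.

Lemma mfun_ind (b : Omega -> bool) : measurable_fun setT b ->
  measurable_fun setT (fun w => ((b w : nat)%:R : R)).
Proof.
move=> mb; apply: (@measurableT_comp _ _ _ _ _ _ (fun x : bool => (x : nat)%:R : R)) => //.
Qed.

Lemma lim1 (A : nat -> set Omega) : (forall k, measurable (A k)) ->
  nondecreasing_seq A -> \bigcup_k A k = setT ->
  forall v, v < 1 -> exists k, v < pr (A k).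
Proof.
move=> mA ndA UA v v1.
have := @nondecreasing_cvg_mu _ _ R P _ mA _ ndA; rewrite UA => /(_ measurableT).
move=> h.
have : (P \o A) x @[x --> \oo] --> 1%:E by rewrite -(probability_setT P).
move=> /fine_cvg /cvgr_gt /(_ v v1) [N _ HN].
by exists N; apply: (HN N); rewrite /= leqnn.
Qed.


Section Cdf.
Variable X : Omega -> R.
Hypothesis mX : measurable_fun setT X.
Variable F : R -> R.
Hypothesis hF : forall c, P [set w | X w <= c] = (F c)%:E.
Hypothesis cF : forall x : R, {for x, continuous F}.

Lemma mle c : measurable [set w | X w <= c].
Proof. apply: mset; apply: measurable_realfun.measurable_fun_ler => //; exact: measurable_cst. Qed.

Lemma FE c : F c = pr [set w | X w <= c].
Proof. by rewrite /pr hF. Qed.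

Lemma Fmono x y : x <= y -> F x <= F y.
Proof.
move=> xy; rewrite !FE; apply: pr_le; try exact: mle.
by move=> w /= h; apply: le_trans xy.
Qed.

Lemma F_above v : v < 1 -> exists x, v < F x.
Proof.
move=> v1.
have [|||k hk] := @lim1 (fun k : nat => [set w | X w <= k%:R]) _ _ _ v v1.
- by move=> k; exact: mle.
- move=> i j ij; apply/subsetPset => w /= h; apply: (le_trans h); by rewrite ler_nat.
- apply/seteqP; split => // w _; exists (Num.bound `|X w|) => //=.
  apply: (le_trans (ler_norm _)); apply: ltW; apply: archi_boundP; exact: normr_ge0.
by exists k%:R; rewrite FE.
Qed.

Lemma F_below v : 0 < v -> exists x, F x < v.
Proof.
move=> v0.
have [|||k hk] := @lim1 (fun k : nat => ~` [set w | X w <= - k%:R]) _ _ _ (1 - v) ltac:(lra).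
- by move=> k; apply: measurableC; exact: mle.
- move=> i j ij; apply/subsetPset => w /= h1 h2; apply: h1; apply: (le_trans h2).
  by rewrite lerN2 ler_nat.
- apply/seteqP; split => // w _; exists (Num.bound `|X w|) => //= h.
  have := archi_boundP (normr_ge0 (X w)); move: h; rewrite -normrN.
  move=> h1 h2; have := ler_norm (- X w); lra.
exists (- k%:R); move: hk; rewrite pr_C; last exact: mle.
by rewrite -FE; lra.
Qed.

Lemma F_level v : 0 < v < 1 -> exists c, F c = v.
Proof.
case/andP => v0 v1.
have [x0 h0] := F_below v0; have [x1 h1] := F_above v1.
have x01 : x0 <= x1.
  rewrite leNgt; apply/negP => x10; have := Fmono (ltW x10); lra.
have hv : Order.min (F x0) (F x1) <= v <= Order.max (F x0) (F x1).
  by rewrite ge_min le_max (ltW h0) (ltW h1) orbT.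
have [c _ hc] := @IVT R F x0 x1 v x01 (continuous_subspaceT cF) hv.
by exists c.
Qed.

Lemma F_up a del : 0 < a < 1 -> 0 < del -> exists c, a < F c <= a + del.
Proof.
case/andP => a0 a1 d0.
have [h|h] := ltP (a + del) 1.
- have [|c hc] := F_level (v := a + del); first by apply/andP; split; lra.
  by exists c; rewrite hc; apply/andP; split; lra.
- have [|c hc] := F_level (v := (a + 1) / 2); first by apply/andP; split; lra.
  by exists c; rewrite hc; apply/andP; split; lra.
Qed.

Lemma F_down a del : 0 < a < 1 -> 0 < del -> exists c, a - del <= F c < a.
Proof.
case/andP => a0 a1 d0.
have [h|h] := ltP 0 (a - del).
- have [|c hc] := F_level (v := a - del); first by apply/andP; split; lra.
  by exists c; rewrite hc; apply/andP; split; lra.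
- have [|c hc] := F_level (v := a / 2); first by apply/andP; split; lra.
  by exists c; rewrite hc; apply/andP; split; lra.
Qed.

End Cdf.

Unset Implicit Arguments.
Section Main.
Variable X : nat -> Omega -> R.
Hypothesis mX : forall n, measurable_fun setT (X n).
Variable Z : forall n, 'I_n -> Omega -> R.
Hypothesis mZ : forall n i, measurable_fun setT (Z n i).
Variable F : R -> R.
Hypothesis hF : forall n c, P [set w | X n w <= c] = (F c)%:E.
Hypothesis cF : forall x : R, {for x, continuous F}.
Hypothesis conv : forall c eps : R, 0 < eps ->
  P [set w | eps <= `| ecdf (fun i => Z n i w) c - F c |] @[n --> \oo] --> 0%E.

Lemma mecdf n (x : Omega -> R) : measurable_fun setT x ->
  measurable_fun setT (fun w => ecdf (fun i => Z n i w) (x w)).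
Proof.
move=> mx; rewrite /ecdf; apply: measurable_realfun.measurable_funM; first exact: measurable_cst.
apply: measurable_sum => i; apply: mfun_ind.
exact: measurable_realfun.measurable_fun_ler.
Qed.

Lemma mecdfs n (x : Omega -> R) : measurable_fun setT x ->
  measurable_fun setT (fun w => ecdfs (fun i => Z n i w) (x w)).
Proof.
move=> mx; rewrite /ecdfs; apply: measurable_realfun.measurable_funM; first exact: measurable_cst.
apply: measurable_sum => i; apply: mfun_ind.
exact: measurable_realfun.measurable_fun_ltr.
Qed.

Definition Bad n c eta := [set w | eta <= `| ecdf (fun i => Z n i w) c - F c |].

Lemma mBad n c eta : measurable (Bad n c eta).
Proof.
apply: mset; apply: measurable_realfun.measurable_fun_ler; first exact: measurable_cst.
apply: measurableT_comp; first exact: measurable_realfun.normr_measurable.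
apply: measurable_realfun.measurable_funB; last exact: measurable_cst.
by apply: mecdf; exact: measurable_cst.
Qed.

Lemma small c eta del : 0 < eta -> 0 < del -> \forall n \near \oo, pr (Bad n c eta) <= del.
Proof.
move=> e0 d0; have := conv c eta e0 => /fine_cvg /cvgr0_norm_le /(_ del d0).
apply: filterS => n /=; apply: le_trans; exact: ler_norm.
Qed.

Lemma FEn n c : F c = pr [set w | X n w <= c].
Proof. by rewrite /pr hF. Qed.

Lemma mXle n c : measurable [set w | X n w <= c].
Proof. exact: (mle (mX n)). Qed.

Lemma E1_cvg a : 0 < a < 1 ->
  (fun n => pr [set w | ecdf (fun i => Z n i w) (X n w) < a]) @ \oo --> a.
Proof.
move=> ha; apply/cvgrPdist_le => e e0.
have d0 : 0 < e / 2 by lra.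
have [c /andP[c1 c2]] := F_up (mX 0) (hF 0) cF ha d0.
have [c' /andP[c1' c2']] := F_down (mX 0) (hF 0) cF ha d0.
have eta0 : 0 < F c - a by lra.
have eta0' : 0 < a - F c' by lra.
near=> n.
have mE : measurable [set w | ecdf (fun i => Z n i w) (X n w) < a].
  apply: mset; apply: measurable_realfun.measurable_fun_ltr; last exact: measurable_cst.
  exact: mecdf.
have hb : pr (Bad n c (F c - a)) <= e / 2 by near: n; exact: small.
have hb' : pr (Bad n c' (a - F c')) <= e / 2 by near: n; exact: small.
have up : pr [set w | ecdf (fun i => Z n i w) (X n w) < a] <= pr [set w | X n w <= c] + pr (Bad n c (F c - a)).
  apply: le_trans (pr_U (mXle n c) (mBad n c _)).
  apply: pr_le => //; first by apply: measurableU; [exact: mXle|exact: mBad].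
  move=> w /= hw; rewrite /Bad /=.
  have [xc|cx] := leP (X n w) c; first by left.
  right; have : ecdf (fun i => Z n i w) c <= ecdf (fun i => Z n i w) (X n w).
    by apply: ecdf_le; exact: ltW.
  move=> h; rewrite ler_normr; apply/orP; right; lra.
have lo : pr [set w | X n w <= c'] <= pr [set w | ecdf (fun i => Z n i w) (X n w) < a] + pr (Bad n c' (a - F c')).
  apply: le_trans (pr_U mE (mBad n c' _)).
  apply: pr_le => //; first by exact: mXle.
  by apply: measurableU => //; exact: mBad.
  move=> w /= hw; rewrite /Bad /=.
  have h : ecdf (fun i => Z n i w) (X n w) <= ecdf (fun i => Z n i w) c' by exact: ecdf_le.
  have [ha'|ha'] := ltP (ecdf (fun i => Z n i w) (X n w)) a; first by left.
  right; rewrite ler_normr; apply/orP; left; lra.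
rewrite -(FEn n c) in up; rewrite -(FEn n c') in lo.
rewrite ler_norml; apply/andP; split; lra.
Unshelve. all: by end_near.
Qed.

Lemma E2_cvg b : 0 < b < 1 ->
  (fun n => pr [set w | b <= ecdfs (fun i => Z n i w) (X n w)]) @ \oo --> 1 - b.
Proof.
move=> hb0; apply/cvgrPdist_le => e e0.
have d0 : 0 < e / 2 by lra.
have [c /andP[c1 c2]] := F_down (mX 0) (hF 0) cF hb0 d0.
have [c' /andP[c1' c2']] := F_up (mX 0) (hF 0) cF hb0 d0.
have eta0 : 0 < b - F c by lra.
have eta0' : 0 < F c' - b by lra.
near=> n.
have mE : measurable [set w | b <= ecdfs (fun i => Z n i w) (X n w)].
  apply: mset; apply: measurable_realfun.measurable_fun_ler; first exact: measurable_cst.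
  exact: mecdfs.
have hb : pr (Bad n c (b - F c)) <= e / 2 by near: n; exact: small.
have hb' : pr (Bad n c' (F c' - b)) <= e / 2 by near: n; exact: small.
have up : pr [set w | b <= ecdfs (fun i => Z n i w) (X n w)] <= pr (~` [set w | X n w <= c]) + pr (Bad n c (b - F c)).
  apply: le_trans (pr_U (measurableC (mXle n c)) (mBad n c _)).
  apply: pr_le => //; first by apply: measurableU; [apply: measurableC; exact: mXle|exact: mBad].
  move=> w /= hw; rewrite /Bad /=.
  have [xc|cx] := leP (X n w) c; last by left.
  right; have : ecdfs (fun i => Z n i w) (X n w) <= ecdf (fun i => Z n i w) c.
    by rewrite /ecdfs /ecdf; apply: cnt_imp => i h; apply: le_trans xc; exact: ltW.
  move=> h; rewrite ler_normr; apply/orP; left; lra.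
have lo : pr (~` [set w | X n w <= c']) <= pr [set w | b <= ecdfs (fun i => Z n i w) (X n w)] + pr (Bad n c' (F c' - b)).
  apply: le_trans (pr_U mE (mBad n c' _)).
  apply: pr_le => //; first by apply: measurableC; exact: mXle.
  by apply: measurableU => //; exact: mBad.
  move=> w /= hw; rewrite /Bad /=.
  have cx : c' < X n w by rewrite ltNge; apply/negP.
  have h : ecdf (fun i => Z n i w) c' <= ecdfs (fun i => Z n i w) (X n w).
    by rewrite /ecdfs /ecdf; apply: cnt_imp => i h; apply: le_lt_trans cx.
  have [hb2|hb2] := leP b (ecdfs (fun i => Z n i w) (X n w)); first by left.
  right; rewrite ler_normr; apply/orP; right; lra.
rewrite !pr_C in up lo; try exact: mXle.
rewrite -(FEn n c) in up; rewrite -(FEn n c') in lo.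
rewrite ler_norml; apply/andP; split; lra.
Unshelve. all: by end_near.
Qed.

End Main.

End Pr.

Section Meas.
Variables (R : realType) (d : measure_display) (Omega : measurableType d).
Variables (T tstar : nat).

Lemma msum_cond (e : 'I_T -> Omega -> R) (Pc : pred 'I_T) :
  (forall t, measurable_fun setT (e t)) ->
  measurable_fun setT (fun w => \sum_(t < T | Pc t) e t w).
Proof.
move=> me.
rewrite (_ : (fun w => _) = (fun w => \sum_(t < T) (if Pc t then e t w else 0))); last first.
  by apply: funext => w; rewrite big_mkcond.
apply: measurable_sum => t; case: (Pc t) => //; exact: measurable_cst.
Qed.

Lemma mnabla (e : 'I_T -> Omega -> R) : (forall t, measurable_fun setT (e t)) ->
  measurable_fun setT (fun w => nabla tstar (fun t => e t w)).
Proof.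
move=> me; rewrite /nabla.
apply: measurable_realfun.measurable_funB; apply: measurable_realfun.measurable_funM;
  try exact: measurable_cst; exact: msum_cond.
Qed.
End Meas.

(* Index n = N_0 (number of control units). *)
Theorem corollary1 (R : realType) (d : measure_display) (Omega : measurableType d)
  (P : probability Omega R) (T tstar : nat) (htstar : (0 < tstar < T)%N)
  (alpha : nat -> 'I_T -> R)
  (theta1 : nat -> Omega -> R) (eta1 : nat -> 'I_T -> Omega -> R)
  (theta0 : forall n : nat, 'I_n -> Omega -> R)
  (eta0 : forall n : nat, 'I_n -> 'I_T -> Omega -> R)
  (gam : nat -> 'I_T -> Omega -> R)
  (F : R -> R) (alpha0 tau : R) :
  (forall n, measurable_fun setT (theta1 n)) ->
  (forall n t, measurable_fun setT (eta1 n t)) ->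
  (forall n i, measurable_fun setT (theta0 n i)) ->
  (forall n i t, measurable_fun setT (eta0 n i t)) ->
  (forall n t, measurable_fun setT (gam n t)) ->
  let W1 n := fun w => nabla tstar (fun t => eta1 n t w) in
  let W0 n i := fun w => nabla tstar (fun t => eta0 n i t w) in
  (* Assumption 1 (i): mean zero *)
  (forall n, ('E_P[W1 n] = 0)%E) ->
  (forall n i, ('E_P[W0 n i] = 0)%E) ->
  (* Assumption 1 (ii): common marginal cdf F, continuous, finite 2nd moment *)
  (forall x : R, {for x, continuous F}) ->
  (forall n c, P [set w | W1 n w <= c] = (F c)%:E) ->
  (forall n i c, P [set w | W0 n i w <= c] = (F c)%:E) ->
  (forall n, P.-integrable setT (fun w => (W1 n w ^+ 2)%:E)) ->
  (forall n i, P.-integrable setT (fun w => (W0 n i w ^+ 2)%:E)) ->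
  (* Assumption 1 (iii): convergence in probability as N_0 -> oo *)
  (forall eps : R, 0 < eps ->
     P [set w | eps <= `| avg (fun i => W0 n i w) |] @[n --> \oo] --> 0%E) ->
  (forall c eps : R, 0 < eps ->
     P [set w | eps <= `| ecdf (fun i => W0 n i w) c - F c |] @[n --> \oo]
       --> 0%E) ->
  (* level and null hypothesis alpha = alpha0 *)
  0 < tau < 1 ->
  (forall n, (T - tstar)%:R^-1 * (\sum_(t < T | (tstar <= t)%N) alpha n t)
             = alpha0) ->
  let Y1 n := fun (t : 'I_T) (w : Omega) => (if (tstar <= t)%N then alpha n t else 0)
                         + theta1 n w + gam n t w + eta1 n t w in
  let Y0 n := fun (i : 'I_n) (t : 'I_T) (w : Omega) => theta0 n i w + gam n t w + eta0 n i t w in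
  P [set w | reject tstar (fun t => Y1 n t w) (fun i t => Y0 n i t w) alpha0 tau]
    @[n --> \oo] --> (tau%:E).

Proof.
move=> m1 me1 m0 me0 mg W1 W0 _ _ cF hF1 hF0 _ _ _ conv /andP[t0 t1] hal Y1 Y0.
have htau : 0 < tau < 1 by rewrite t0 t1.
have mW1 n : measurable_fun setT (W1 n) by apply: mnabla.
have mW0 n i : measurable_fun setT (W0 n i) by apply: mnabla.
pose E1 n := [set w | ecdf (fun i => W0 n i w) (W1 n w) < tau / 2].
pose E2 n := [set w | 1 - tau / 2 <= ecdfs (fun i => W0 n i w) (W1 n w)].
have c1 := @E1_cvg R d Omega P W1 mW1 W0 mW0 F hF1 cF conv (tau / 2) ltac:(apply/andP; split; lra).
have c2 := @E2_cvg R d Omega P W1 mW1 W0 mW0 F hF1 cF conv (1 - tau / 2) ltac:(apply/andP; split; lra).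
have key : \forall n \near \oo,
  P [set w | reject tstar (fun t => Y1 n t w) (fun i t => Y0 n i t w) alpha0 tau]
  = (pr P (E1 n) + pr P (E2 n))%:E.
  near=> n.
  have n0 : (0 < n)%N by near: n; exists 1%N.
  have -> : [set w | reject tstar (fun t => Y1 n t w) (fun i t => Y0 n i t w) alpha0 tau]
    = E1 n `|` E2 n.
    apply/seteqP; split => w /=.
    - rewrite /Y1 /Y0 (@reject_eq R T tstar htstar n n0 (alpha n) (theta1 n w) (fun t => gam n t w)
        (fun t => eta1 n t w) (fun i => theta0 n i w) (fun i t => eta0 n i t w) alpha0 tau (hal n) htau).
      by case/orP; [left|right].
    - rewrite /Y1 /Y0 (@reject_eq R T tstar htstar n n0 (alpha n) (theta1 n w) (fun t => gam n t w)
        (fun t => eta1 n t w) (fun i => theta0 n i w) (fun i t => eta0 n i t w) alpha0 tau (hal n) htau).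
      by case => h; apply/orP; [left|right].
  have mE1 : measurable (E1 n).
    apply: mset; apply: measurable_realfun.measurable_fun_ltr; last exact: measurable_cst.
    exact: mecdf.
  have mE2 : measurable (E2 n).
    apply: mset; apply: measurable_realfun.measurable_fun_ler; first exact: measurable_cst.
    exact: mecdfs.
  rewrite (PE P (measurableU _ _ mE1 mE2)) pr_disj //.
  apply/seteqP; split => // w [/= h1 h2].
  have : ecdfs (fun i => W0 n i w) (W1 n w) <= ecdf (fun i => W0 n i w) (W1 n w).
    by rewrite /ecdfs /ecdf; apply: cnt_imp => i; exact: ltW.
  move: h1 h2; rewrite /E1 /E2 /=; lra.
apply: cvg_EFin; first by apply: filterS key => n ->.
have c3 := cvgD c1 c2.
have e : tau / 2 + (1 - (1 - tau / 2)) = tau by lra.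
rewrite e in c3.
set f := (fun n => P _).
have ev : {near \oo, (fun n => pr P (E1 n) + pr P (E2 n)) =1 (fine \o f)}.
  by apply: filterS key => n; rewrite /f /= => ->.
have h1 := near_eq_cvg ev. have h2 := h1 ltac:(typeclasses eauto). exact: (cvg_trans h2 (c3 ltac:(typeclasses eauto))).
Unshelve. all: by end_near.
Qed.
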